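(* Let $U$ be a countably infinite universe, $\mathcal{C}=(L_1,L_2,\ldots)$ a countably infinite collection of languages over $U$, $\mathcal{A}=\{A_g\}_{g\in[K]}$ a partition of $U$ into finitely many groups, $\alpha\in[0,1]$, let $m^\star_\alpha(L_i)$ be computed by the Representative Procedure in the context, and fix a non-decreasing $f:\mathbb{N}\to\mathbb{N}$ with $\lim_{t\to\infty}f(t)=\infty$. Then the Representative Algorithm in the context (with this $f$) generates non-uniformly with $\alpha$-representation from $\mathcal{C}$ with generation times $t^\star_\alpha(L_i)=\max(g(i),m^\star_\alpha(L_i)+1)$, where $g(i)$ is the smallest $j$ with $f(j)\ge i$: that is, for every $i$ and every enumeration of $L_i$, $\Pr_{x\sim\mathcal{G}_t}[x\in L_i\setminus S_t]=1$ for all $t$ with $|S_t|\ge t^\star_\alpha(L_i)$, and the algorithm is $\alpha$-representative with respect to $S_t$ at every $t\ge1$.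
   Context: A language is an infinite subset of $U$; a collection is a sequence of languages (repetitions allowed, entries distinguished by index). An enumeration of a language $L$ is a sequence $x_1,x_2,\ldots$ with every $x_t\in L$ and every $x\in L$ equal to some $x_t$. $S_t$ is the set of distinct strings among $x_1,\ldots,x_t$. Here a generating algorithm outputs at each time $t$ a probability distribution $\mathcal{G}_t$ on $U$. For a finite nonempty $T\subseteq U$, $\mathrm{emp}_T$ is the uniform distribution on $T$, and $\mathrm{emp}_t=\mathrm{emp}_{S_t}$. For a distribution $D$ on $U$, $D^{\mathcal{A}}(g)=\Pr_{x\sim D}[x\in A_g]$ for $g\in[K]$. The generator is $\alpha$-representative at time $t$ with respect to $S_t$ if $\max_{g\in[K]}|\mathrm{emp}_t^{\mathcal{A}}(g)-\mathcal{G}_t^{\mathcal{A}}(g)|\le\alpha$. Scarce groups: for a collection $\mathcal{D}$ of languages and finite $T\subseteq U$, let $B=\{g\in[K]: A_g\cap((\bigcap_{L\in\mathcal{D}}L)\setminus T)=\emptyset\}$. $T$ suffers group scarcity (w.r.t. $\mathcal{D}$ and $\mathcal{A}$) if some $g\in B$ has $\mathrm{emp}_T^{\mathcal{A}}(g)>\alpha$, or $\sum_{g\in B}\mathrm{emp}_T^{\mathcal{A}}(g)>\alpha(K-|B|)$. Representative Procedure. Set $\mathcal{C}'_0=()$. For $i=1,2,\ldots$: append $L_i$ to the end of $\mathcal{C}'_{i-1}$ to get $\mathcal{C}'_i=(L'_1,\ldots,L'_i)$, set $j=i$. Repeat: (i) let $T$ be a finite (nonempty) set of largest size for which there is a subcollection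 $\mathcal{D}$ of the entries $(L'_1,\ldots,L'_j)$ including $L'_j$, with $T\subseteq L$ for every $L\in\mathcal{D}$ and $T$ suffering group scarcity w.r.t. $\mathcal{D}$ and $\mathcal{A}$; $m_{\mathrm{chk}}=|T|$ ($0$ if no such $T$ exists). (ii) If $j\le1$ or $m_{\mathrm{chk}}>m^\star_\alpha(L'_{j-1})$, stop. (iii) Otherwise swap positions $j-1,j$, set $j\leftarrow j-1$, return to (i). On stopping, set $m^\star_\alpha(L_i)=m_{\mathrm{chk}}$. Representative Algorithm (parameter $f$). At time $t$, run the first $f(t)$ iterations of the Representative Procedure to get $\mathcal{C}'_{f(t)}=(L'_1,\ldots,L'_{f(t)})$. Initialize $I_t=()$; for $j=1,\ldots,f(t)$ in order: if $S_t\subseteq L'_j$ and $S_t$ does not suffer group scarcity w.r.t. $I_t\cup\{L'_j\}$ and $\mathcal{A}$, append $L'_j$ to $I_t$. If $I_t$ is empty, set $\mathcal{G}_t=\mathrm{emp}_t$. Otherwise let $B$ be the scarce groups w.r.t. $I_t$ and $S_t$; for each $g\in[K]\setminus B$ pick some $s_g\in A_g\cap((\bigcap_{L\in I_t}L)\setminus S_t)$, and set $\mathcal{G}_t(s_g)=\mathrm{emp}_t^{\mathcal{A}}(g)+\frac{1}{K-|B|}\sum_{h\in B}\mathrm{emp}_t^{\mathcal{A}}(h)$, with $\mathcal{G}_t(x)=0$ for all other $x$. *)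

(* Defs.v *)
From HB Require Import structures.
From mathcomp Require Import all_boot all_order all_algebra.
From mathcomp Require Import boolp classical_sets.
Set Implicit Arguments. Unset Strict Implicit. Unset Printing Implicit Defensive.
Import Order.TTheory GRing.Theory Num.Theory.
Local Open Scope ring_scope.

Definition infinite_set (U : eqType) (P : U -> Prop) : Prop :=
  ~ exists s : seq U, forall y, P y -> y \in s.

(* x_1, x_2, ... (x 0 is ignored) is an enumeration of the language P. *)
Definition enumerates (U : Type) (P : U -> Prop) (x : nat -> U) : Prop :=
  (forall t, (1 <= t)%N -> P (x t)) /\
  (forall y, P y -> exists2 t, (1 <= t)%N & x t = y).

Definition St (U : eqType) (x : nat -> U) (t : nat) : seq U :=
  undup [seq x k | k <- iota 1 t].

(* extended naturals: None stands for +infinity *)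
Definition enat := option nat.
Definition enat_lt (a b : enat) : bool :=
  match a, b with
  | Some m, Some n => (m < n)%N
  | Some _, None => true
  | None, _ => false
  end.
Definition enat_le_nat (a : enat) (n : nat) : bool :=
  if a is Some m then (m <= n)%N else false.

Definition swap (s : seq nat) (a b : nat) : seq nat :=
  [seq nth 0%N s (if k == a then b else if k == b then a else k) | k <- iota 0 (size s)].

Lemma mchk_bound_proof (P : nat -> Prop) (b : nat) :
  (forall n, P n -> (n <= b)%N) ->
  forall n, ((n == 0%N) || `[< P n >]) -> (n <= b)%N.
Proof. by move=> hb n /orP[/eqP -> //|/asboolP /hb]. Qed.

Lemma mchk_ex_proof (P : nat -> Prop) : exists n, ((n == 0%N) || `[< P n >]).
Proof. by exists 0%N. Qed.

(* max over {0} ∪ {n | P n} when bounded, infinity otherwise *)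
Definition esup (P : nat -> Prop) : enat :=
  match pselect (exists b, forall n, P n -> (n <= b)%N) with
  | left hb =>
      let b := cid hb in
      Some (@ex_maxn (fun n => (n == 0%N) || `[< P n >]) (sval b)
              (mchk_ex_proof P) (mchk_bound_proof (svalP b)))
  | right _ => None
  end.

Section Defs.
Variables (U : countType) (R : realFieldType) (K : nat) (grp : U -> 'I_K)
          (alpha : R) (L : nat -> set U).

(* finitely supported distributions on U, given as lists of atoms *)
Definition dist := seq (U * R).
Definition prob (D : dist) (P : U -> Prop) : R := \sum_(a <- D | `[< P a.1 >]) a.2.
Definition distA (D : dist) (g : 'I_K) : R := prob D (fun y => grp y = g).
(* uniform distribution on a duplicate-free list T *)
Definition emp (T : seq U) : dist := [seq (y, (size T)%:R^-1) | y <- T].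
Definition empA (T : seq U) (g : 'I_K) : R := distA (emp T) g.

(* intersection of the languages with indices in D (whole U if D = [::]) *)
Definition inter (D : seq nat) : set U := fun y => forall k, k \in D -> L k y.

Definition scarceG (D : seq nat) (T : seq U) (g : 'I_K) : Prop :=
  forall y, grp y = g -> inter D y -> y \in T.

Definition nscarce (D : seq nat) (T : seq U) : nat :=
  #|[pred g : 'I_K | `[< scarceG D T g >]]|.

Definition suffers (D : seq nat) (T : seq U) : Prop :=
  (exists g, scarceG D T g /\ alpha < empA T g) \/
  alpha * (K - nscarce D T)%:R < \sum_(g < K | `[< scarceG D T g >]) empA T g.

Definition chk (p : seq nat) (n : nat) : Prop :=
  exists (T : seq U) (D : seq nat),
    [/\ uniq T, T != [::], size T = n, {subset D <= p} & last 0%N p \in D] /\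
    (forall y, y \in T -> inter D y) /\ suffers D T.

Definition mchk (p : seq nat) : enat := esup (chk p).

(* inner loop: s is the current order, the new language sits at 1-indexed
   position j; ms gives the m* values already assigned *)
Fixpoint bubble (ms : nat -> enat) (s : seq nat) (j : nat) : seq nat * enat :=
  let m := mchk (take j s) in
  match j with
  | j'.+1 =>
      if j' is j''.+1 then
        if enat_lt (ms (nth 0%N s j'')) m then (s, m)
        else bubble ms (swap s j'' j') j'
      else (s, m)
  | 0 => (s, m)
  end.

(* after i iterations: the ordering C'_i (as indices) and the m* values *)
Fixpoint proc (i : nat) : seq nat * (nat -> enat) :=
  match i with
  | 0 => ([::], fun _ => Some 0%N)
  | i'.+1 =>
      let: (s, ms) := proc i' in
      let: (s', m) := bubble ms (rcons s i'.+1) i'.+1 in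
      (s', fun k => if k == i'.+1 then m else ms k)
  end.

Definition mstar (i : nat) : enat := (proc i).2 i.

Definition It (order : seq nat) (S : seq U) : seq nat :=
  foldl (fun I k => if `[< (forall y, y \in S -> L k y) /\ ~ suffers (rcons I k) S >]
                    then rcons I k else I) [::] order.

Section Alg.
Variables (f : nat -> nat) (x : nat -> U) (sel : nat -> 'I_K -> U).

Definition It_at (t : nat) : seq nat := It (proc (f t)).1 (St x t).

(* G_t, where sel t g is the chosen s_g at time t *)
Definition Gen (t : nat) : dist :=
  let S := St x t in
  let I := It_at t in
  if I is [::] then emp S else
  let extra := (K - nscarce I S)%:R^-1 *
               \sum_(h < K | `[< scarceG I S h >]) empA S h in
  [seq (sel t g, empA S g + extra) | g <- enum 'I_K & ~~ `[< scarceG I S g >]].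

Definition valid_sel : Prop :=
  forall t g, It_at t != [::] -> ~ scarceG (It_at t) (St x t) g ->
    [/\ grp (sel t g) = g, inter (It_at t) (sel t g) & sel t g \notin St x t].

End Alg.

Definition gmin (f : nat -> nat) (i : nat) : nat :=
  match pselect (exists j, (i <= f j)%N) with
  | left h => @ex_minn (fun j => (i <= f j)%N) h
  | right _ => 0%N
  end.

Definition tstar (f : nat -> nat) (i : nat) : enat :=
  if mstar i is Some m then Some (maxn (gmin f i) m.+1) else None.

End Defs.

(* Main.v *)
Require Import Defs.
From HB Require Import structures.
From mathcomp Require Import all_boot all_order all_algebra.
From mathcomp Require Import boolp classical_sets.
From mathcomp Require Import zify.
Set Implicit Arguments. Unset Strict Implicit. Unset Printing Implicit Defensive.
Import Order.TTheory GRing.Theory Num.Theory.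
Local Open Scope ring_scope.

Lemma swap_cat (a : seq nat) (y z : nat) (b : seq nat) :
  swap (a ++ y :: z :: b) (size a) (size a).+1 = a ++ z :: y :: b.
Proof.
apply: (@eq_from_nth _ 0%N).
  by rewrite /swap size_map size_iota !size_cat.
move=> k; rewrite /swap size_map size_iota => hk.
rewrite (nth_map 0%N) ?size_iota // nth_iota // add0n.
case: (ltngtP k (size a)) => h.
- have h2 : (k == (size a).+1) = false by apply/negbTE; rewrite neq_ltn ltnS ltnW.
  by rewrite h2 !nth_cat h.
- case: eqP => [->|hne].
    by rewrite !nth_cat ltnn subnn ltnNge leqnSn /= subSnn.
  rewrite !nth_cat !ltnNge !(ltnW h) /=.
  have -> : (k - size a = (k - size a).-2.+2)%N by lia.
  by [].
- by rewrite h !nth_cat ltnn ltnNge leqnSn /= subSnn subnn.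
Qed.

Section S.
Variables (U : countType) (R : realFieldType) (K : nat) (grp : U -> 'I_K)
          (alpha : R) (L : nat -> set U).

Lemma bubbleSS ms s j : bubble grp alpha L ms s j.+2 =
  if enat_lt (ms (nth 0%N s j)) (mchk grp alpha L (take j.+2 s))
  then (s, mchk grp alpha L (take j.+2 s))
  else bubble grp alpha L ms (swap s j j.+1) j.+1.
Proof. by []. Qed.

Lemma bubble_spec ms new : forall j (a b : seq nat), size a = j ->
  exists a1 a2, [/\ a = a1 ++ a2,
    bubble grp alpha L ms (a ++ new :: b) j.+1 =
      (a1 ++ new :: a2 ++ b, mchk grp alpha L (rcons a1 new)) &
    forall a2' y a2'', a2 = a2' ++ y :: a2'' ->
      ~~ enat_lt (ms y) (mchk grp alpha L (rcons (a1 ++ a2' ++ [:: y]) new))].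
Proof.
elim=> [|j IH] a b ha.
  case: a ha => // _; exists [::], [::]; split; rewrite /= ?take0 //.
  by move=> [|??] ?? [].
case/lastP: a ha => [|a' y]; first by case.
rewrite size_rcons => -[ha'].
have Hs : take j.+2 (rcons a' y ++ new :: b) = rcons (rcons a' y) new.
  by rewrite take_cat size_rcons ha' ltnNge leqnSn /= subSnn /= take0 cats1.
have Hn : nth 0%N (rcons a' y ++ new :: b) j = y.
  by rewrite nth_cat size_rcons ha' ltnSn nth_rcons ha' ltnn eqxx.
rewrite bubbleSS Hs Hn.
case E: (enat_lt (ms y) (mchk grp alpha L (rcons (rcons a' y) new))).
  exists (rcons a' y), [::]; split => //; first by rewrite cats0.
  by move=> [|??] ?? [].
have Hsw : swap (rcons a' y ++ new :: b) j j.+1 = a' ++ new :: y :: b.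
  by rewrite -cats1 -catA -ha' swap_cat.
rewrite Hsw.
have [a1 [a2 [Ha Hb Hc]]] := IH a' (y :: b) ha'; subst a'.
exists a1, (rcons a2 y); split.
- by rewrite rcons_cat.
- by rewrite Hb -[rcons a2 y]cats1 -catA.
- move=> a2' z a2'' Ha2.
  case/lastP: a2'' Ha2 => [|a3 w].
    rewrite cats1 => /eqP; rewrite eqseq_rcons => /andP[/eqP <- /eqP <-].
    by rewrite -rcons_cat E.
  rewrite -rcons_cons -rcons_cat => /eqP; rewrite eqseq_rcons => /andP[/eqP H _].
  exact: Hc H.
Qed.

Lemma procS n : proc grp alpha L n.+1 =
  ((bubble grp alpha L (proc grp alpha L n).2 (rcons (proc grp alpha L n).1 n.+1) n.+1).1,
   fun k => if k == n.+1 then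
     (bubble grp alpha L (proc grp alpha L n).2 (rcons (proc grp alpha L n).1 n.+1) n.+1).2
     else (proc grp alpha L n).2 k).
Proof. cbn [proc]; case: (proc grp alpha L n) => s ms; by case E: (bubble grp alpha L ms (rcons s n.+1) n.+1). Qed.

Lemma proc_size n : size (proc grp alpha L n).1 = n.
Proof.
elim: n => [//|n IH]; rewrite procS -cats1.
have [a1 [a2 [Ha -> _]]] := bubble_spec (proc grp alpha L n).2 n.+1 [::] IH.
by rewrite /= size_cat /= cats0 -IH Ha size_cat addnS.
Qed.

Lemma proc_step n : exists a1 a2,
  [/\ (proc grp alpha L n).1 = a1 ++ a2,
      (proc grp alpha L n.+1).1 = a1 ++ n.+1 :: a2,
      (proc grp alpha L n.+1).2 n.+1 = mchk grp alpha L (rcons a1 n.+1),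
      forall k, k != n.+1 -> (proc grp alpha L n.+1).2 k = (proc grp alpha L n).2 k &
      forall a2' y a2'', a2 = a2' ++ y :: a2'' ->
        ~~ enat_lt ((proc grp alpha L n).2 y)
                   (mchk grp alpha L (rcons (a1 ++ a2' ++ [:: y]) n.+1))].
Proof.
have [a1 [a2 [Ha Hb Hc]]] := bubble_spec (proc grp alpha L n).2 n.+1 [::] (proc_size n).
exists a1, a2; split => //.
- by rewrite procS -cats1 Hb cats0.
- by rewrite procS -cats1 Hb /= eqxx.
- by move=> k /negbTE hk; rewrite procS /= hk.
Qed.

Lemma proc_le n k : k \in (proc grp alpha L n).1 -> (k <= n)%N.
Proof.
elim: n k => [//|n IH] k.
have [a1 [a2 [Ha -> _ _ _]]] := proc_step n.
rewrite mem_cat in_cons => /or3P[h|/eqP->//|h].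
- by apply: leqW; apply: IH; rewrite Ha mem_cat h.
- by apply: leqW; apply: IH; rewrite Ha mem_cat h orbT.
Qed.

Lemma proc_ms n i : (i <= n)%N -> (proc grp alpha L n).2 i = mstar grp alpha L i.
Proof.
elim: n => [|n IH]; first by rewrite leqn0 => /eqP ->.
rewrite leq_eqVlt => /orP[/eqP -> //|hi].
have [a1 [a2 [_ _ _ Hk _]]] := proc_step n.
by rewrite Hk ?IH // neq_ltn hi.
Qed.

Definition before (s : seq nat) (i y : nat) := (y \in s) && (index y s <= index i s)%N.

Lemma before_split (p q : seq nat) (i y : nat) : i \notin p -> before (p ++ i :: q) i y -> y \in rcons p i.
Proof.
move=> hi /andP[]; rewrite !index_cat (negbTE hi) /= eqxx addn0 mem_rcons in_cons.
case: ifP => hy; first by rewrite orbT.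
rewrite /= eq_sym; case: eqP => //= _ _; lia.
Qed.

Lemma before_self (p q : seq nat) (i y : nat) : i \notin p -> y \in rcons p i -> before (p ++ i :: q) i y.
Proof.
move=> hi; rewrite mem_rcons in_cons => /orP[/eqP ->|hy].
  by rewrite /before mem_cat mem_head orbT leqnn.
rewrite /before mem_cat hy /= !index_cat hy (negbTE hi) /= eqxx addn0.
by apply: ltnW; rewrite index_mem.
Qed.

Lemma before_ins (a1 a2 : seq nat) (new i y : nat) : y != new -> i != new ->
  before (a1 ++ new :: a2) i y -> before (a1 ++ a2) i y.
Proof.
move=> hy hi /andP[]; rewrite /before !mem_cat in_cons (negbTE hy) /= => ->.
rewrite !index_cat /= eq_sym (negbTE hy) eq_sym (negbTE hi).
case: ifP => h1; case: ifP => h2 //; move: h1 h2; rewrite -!index_mem. clear hy hi.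
all: move: (index y a1) (index i a1) (index y a2) (index i a2) (size a1) => *; lia.
Qed.

Lemma before_new (a1 a2 : seq nat) (new i : nat) : new \notin a1 -> before (a1 ++ new :: a2) i new -> i \notin a1.
Proof.
move=> hn /andP[_]; rewrite !index_cat (negbTE hn) /= eqxx addn0.
case: ifP => // h; move: h; rewrite -index_mem.
move: (index i a1) (size a1) => *; lia.
Qed.

Lemma esup_le (P : nat -> Prop) b n : esup P = Some b -> P n -> (n <= b)%N.
Proof.
rewrite /esup; case: pselect => // hb [<-] hn.
case: ex_maxnP => k _; apply; apply/orP; right; exact/asboolP.
Qed.

Lemma chk_intro p D T : {subset D <= p} -> last 0%N p \in D -> uniq T -> T != [::] ->
  (forall y, y \in T -> inter L D y) -> suffers grp alpha L D T ->
  chk grp alpha L p (size T).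
Proof. by move=> *; exists T, D; split. Qed.

Definition good D T := [/\ uniq T, T != [::], (forall y, y \in T -> inter L D y) &
   suffers grp alpha L D T].

Lemma invariant i m : (1 <= i)%N -> mstar grp alpha L i = Some m ->
  forall n, (i <= n)%N ->
  i \in (proc grp alpha L n).1 /\
  forall D T, (forall y, y \in D -> before (proc grp alpha L n).1 i y) -> i \in D ->
    good D T -> (size T <= m)%N.
Proof.
case: i => [//|i] _ hm; elim => [//|n IH].
rewrite leq_eqVlt => /orP[/eqP [<-]|hi].
  have [a1 [a2 [Ha Hb Hc _ _]]] := proc_step i.
  have ha1 : i.+1 \notin a1.
    by apply/negP => h; have := proc_le (k:=i.+1) (n:=i); rewrite Ha mem_cat h ltnn => /(_ isT).
  rewrite Hb; split; first by rewrite mem_cat mem_head orbT.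
  move=> D T hD hiD [hu hne hT hs].
  have := esup_le (P := chk grp alpha L (rcons a1 i.+1)) (b := m) (n := size T).
  apply.
    by have <- : mchk grp alpha L (rcons a1 i.+1) = Some m by rewrite -Hc.
  apply: (chk_intro (D := D)) => //; last by rewrite last_rcons.
  by move=> y /hD; apply: before_split.
have [IH1 IH2] := IH hi.
have [a1 [a2 [Ha Hb Hc Hk Hd]]] := proc_step n.
have hin : i.+1 != n.+1 by rewrite neq_ltn hi.
have hn1 : n.+1 \notin a1.
  by apply/negP => h; have := proc_le (k:=n.+1) (n:=n); rewrite Ha mem_cat h ltnn => /(_ isT).
rewrite Hb; split.
  by move: IH1; rewrite Ha !mem_cat in_cons => /orP[->|->]; rewrite ?orbT.
move=> D T hD hiD hg.
case: (boolP (n.+1 \in D)) => hnD; last first.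
  apply: (IH2 D T) => // y hy; rewrite Ha; apply: (before_ins (new := n.+1)) => //.
    by apply/negP => /eqP h; rewrite -h hy in hnD.
  exact: hD.
have hia1 : i.+1 \notin a1 by apply: (before_new hn1); apply: hD.
have hia2 : i.+1 \in a2 by move: IH1; rewrite Ha mem_cat (negbTE hia1).
set a2' := take (index i.+1 a2) a2; set a2'' := drop (index i.+1 a2).+1 a2.
have Ha2 : a2 = a2' ++ i.+1 :: a2''.
  by rewrite -{1}(cat_take_drop (index i.+1 a2) a2) (drop_nth 0%N) ?index_mem // nth_index.
have hia2' : i.+1 \notin a2' by rewrite in_take ?ltnn.
have Hlt := Hd a2' i.+1 a2'' Ha2.
rewrite proc_ms // hm in Hlt.
case E: (mchk grp alpha L (rcons (a1 ++ a2' ++ [:: i.+1]) n.+1)) Hlt => [b|] //=.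
rewrite -leqNgt => hbm; apply: leq_trans hbm.
case: hg => hu hne hT hs.
apply: (esup_le E); apply: (chk_intro (D := D)) => //; last by rewrite last_rcons.
move=> y hy; case: (eqVneq y n.+1) => [->|hyn]; first by rewrite mem_rcons mem_head.
have := hD y hy; rewrite Ha2 -cat_cons -[a1 ++ _]/(a1 ++ (n.+1 :: a2') ++ _) catA.
move/before_split => H.
have : y \in rcons (a1 ++ n.+1 :: a2') i.+1.
  by apply: H; rewrite mem_cat in_cons negb_or hia1 /= negb_or hin.
rewrite !mem_rcons !in_cons !mem_cat !in_cons (negbTE hyn) /= /=.
by case/orP => [->|/orP[->|->]]; rewrite ?orbT.
Qed.

Lemma sum_distA (D : dist U R) : \sum_(h < K) distA grp D h = \sum_(a <- D) a.2.
Proof.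
elim: D => [|a D IH].
  by rewrite big_nil big1 // => h _; rewrite /distA /prob big_nil.
rewrite big_cons -IH /distA /prob.
under eq_bigr do rewrite big_cons.
rewrite (bigD1 (grp a.1)) //= asboolT // [in RHS](bigD1 (grp a.1)) //= -addrA.
congr (_ + (_ + _)); apply: eq_bigr => h hne.
by rewrite asboolF // => /eqP; rewrite eq_sym (negbTE hne).
Qed.

Lemma emp_sum (S : seq U) : S != [::] -> \sum_(a <- emp R S) a.2 = 1 :> R.
Proof.
move=> hS; rewrite big_map big_const_seq count_predT.
have -> : forall n (c : R), iter n (+%R c) 0 = c *+ n.
  by move=> n c; elim: n => //= n ->; rewrite mulrS.
rewrite -[_ *+ size S]mulr_natr mulVf // pnatr_eq0; by case: S hS.
Qed.

Lemma empA_ge0 (S : seq U) g : 0 <= empA R grp S g.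
Proof.
rewrite /empA /distA /prob big_map; apply: sumr_ge0 => y _.
by rewrite invr_ge0 ler0n.
Qed.

Lemma sum_empA (S : seq U) : S != [::] -> \sum_(h < K) empA R grp S h = 1.
Proof. by move=> hS; rewrite /empA sum_distA emp_sum. Qed.

Lemma distA_gen (sc : 'I_K -> bool) (sel : 'I_K -> U) (w : 'I_K -> R) h :
  (forall g, ~~ sc g -> grp (sel g) = g) ->
  distA grp [seq (sel g, w g) | g <- enum 'I_K & ~~ sc g] h = if sc h then 0 else w h.
Proof.
move=> hsel; rewrite /distA /prob big_map big_filter_cond big_mkcond /=.
rewrite big_enum_cond big_mkcond /= (bigD1 h) //= big1 ?addr0.
  case: (boolP (sc h)) => //= hs; rewrite asboolT //; exact: hsel.
move=> g hg; case: (boolP (sc g)) => //= hsg.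
by rewrite asboolF // hsel // => /eqP; rewrite (negbTE hg).
Qed.

Lemma prob_all (D : dist U R) (P : U -> Prop) :
  (forall a, a \in D -> P a.1) -> prob D P = \sum_(a <- D) a.2.
Proof.
move=> hP; rewrite /prob big_seq_cond [RHS]big_seq; apply: eq_bigl => a.
by case: (boolP (a \in D)) => //= h; rewrite asboolT //; apply: hP.
Qed.

Definition Fst (S : seq U) (I : seq nat) (k : nat) :=
  if `[< (forall y, y \in S -> L k y) /\ ~ suffers grp alpha L (rcons I k) S >]
  then rcons I k else I.

Lemma It_foldl order S : It grp alpha L order S = foldl (Fst S) [::] order.
Proof. by []. Qed.

Lemma fold_acc S p : forall acc k, k \in acc -> k \in foldl (Fst S) acc p.
Proof.
elim: p => [//|a p IH] acc k hk /=; apply: IH; rewrite /Fst.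
by case: ifP => // _; rewrite mem_rcons in_cons hk orbT.
Qed.

Lemma fold_inv S p : forall acc k, k \in foldl (Fst S) acc p ->
  k \in acc \/ (k \in p /\ forall y, y \in S -> L k y).
Proof.
elim: p => [|a p IH] acc k /=; first by left.
move/IH => [|[hk hL]]; last by right; rewrite in_cons hk orbT.
rewrite /Fst; case: ifP => [/asboolP [hS _]|_]; last by left.
rewrite mem_rcons in_cons => /orP[/eqP ->|]; last by left.
by right; rewrite mem_head.
Qed.

Lemma fold_nsuff S p : forall acc, foldl (Fst S) acc p = acc \/
  ~ suffers grp alpha L (foldl (Fst S) acc p) S.
Proof.
elim: p => [|a p IH] acc /=; first by left.
case: (IH (Fst S acc a)) => [->|]; last by right.
rewrite /Fst; case: ifP => [/asboolP [_ h]|_]; [by right | by left].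
Qed.

Lemma It_has order S i :
  i \in order -> (forall y, y \in S -> L i y) ->
  (forall D, (forall y, y \in D -> before order i y) -> i \in D ->
     (forall y, y \in S -> inter L D y) -> ~ suffers grp alpha L D S) ->
  i \in It grp alpha L order S.
Proof.
move=> hi hS hD; rewrite It_foldl.
set p := take (index i order) order; set q := drop (index i order).+1 order.
have Ho : order = p ++ i :: q.
  by rewrite -{1}(cat_take_drop (index i order) order) (drop_nth 0%N) ?index_mem // nth_index.
have hip : i \notin p by rewrite in_take ?ltnn.
rewrite Ho foldl_cat /=; apply: fold_acc.
set I' := foldl (Fst S) [::] p.
have HI' : forall k, k \in I' -> k \in p /\ forall y, y \in S -> L k y.
  by move=> k /fold_inv [//|].
rewrite /Fst asboolT ?mem_rcons ?mem_head //; split => // hs.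
apply: (hD (rcons I' i)) => //.
- move=> y; rewrite Ho mem_rcons in_cons => /orP[/eqP ->|/HI' [hy _]].
    by apply: before_self => //; rewrite mem_rcons mem_head.
  by apply: before_self => //; rewrite mem_rcons in_cons hy orbT.
- by rewrite mem_rcons mem_head.
- move=> y hy k; rewrite mem_rcons in_cons => /orP[/eqP ->|/HI' [_ hk]]; first exact: hS.
  exact: hk.
Qed.

Lemma nsuff_facts I (S : seq U) : ~ suffers grp alpha L I S ->
  (forall g, scarceG grp L I S g -> empA R grp S g <= alpha) /\
  \sum_(h < K | `[< scarceG grp L I S h >]) empA R grp S h <= alpha * (K - nscarce grp L I S)%:R.
Proof.
move=> hns; split.
  by move=> g hg; rewrite leNgt; apply/negP => hlt; apply: hns; left; exists g.
by rewrite leNgt; apply/negP => hlt; apply: hns; right.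
Qed.

Lemma gen_repr I (S : seq U) (sel : 'I_K -> U) g : 0 <= alpha ->
  ~ suffers grp alpha L I S ->
  (forall g, ~~ `[< scarceG grp L I S g >] -> grp (sel g) = g) ->
  `|empA R grp S g - distA grp
      [seq (sel g, empA R grp S g + (K - nscarce grp L I S)%:R^-1 *
             \sum_(h < K | `[< scarceG grp L I S h >]) empA R grp S h)
      | g <- enum 'I_K & ~~ `[< scarceG grp L I S g >]] g| <= alpha.
Proof.
move=> ha hns hsel; have [h1 h2] := nsuff_facts hns.
rewrite distA_gen //.
case: (boolP `[< scarceG grp L I S g >]) => [/asboolP hg|_].
  by rewrite subr0 ger0_norm ?empA_ge0 //; apply: h1.
set c := (K - nscarce grp L I S)%N.
set s := \sum_(h < K | _) _.
have s0 : 0 <= s by apply: sumr_ge0 => h _; apply: empA_ge0.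
rewrite opprD addrA subrr add0r normrN ger0_norm; last by rewrite mulr_ge0 // invr_ge0 ler0n.
case: (eqVneq c 0%N) => [->|hc].
  by rewrite invr0 mul0r.
have hc' : (c%:R : R) != 0 by rewrite pnatr_eq0.
apply: (le_trans (y := c%:R^-1 * (alpha * c%:R))).
  by apply: ler_wpM2l => //; rewrite invr_ge0 ler0n.
by rewrite mulrCA mulVf // mulr1.
Qed.

Lemma gen_mass I (S : seq U) (sel : 'I_K -> U) :
  S != [::] -> ~ suffers grp alpha L I S ->
  (forall g, ~~ `[< scarceG grp L I S g >] -> grp (sel g) = g) ->
  \sum_(a <- [seq (sel g, empA R grp S g + (K - nscarce grp L I S)%:R^-1 *
             \sum_(h < K | `[< scarceG grp L I S h >]) empA R grp S h)
      | g <- enum 'I_K & ~~ `[< scarceG grp L I S g >]]) a.2 = 1.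
Proof.
move=> hS hns hsel; have [h1 h2] := nsuff_facts hns.
rewrite -sum_distA.
under eq_bigr do rewrite distA_gen //.
set sc := fun h => `[< scarceG grp L I S h >].
set c := (K - nscarce grp L I S)%N.
have Hall := sum_empA hS.
rewrite (bigID sc) /= in Hall.
have hcard : #|[pred h | ~~ sc h]| = c.
  have hC := cardC [pred h : 'I_K | sc h]; rewrite card_ord in hC.
  transitivity #|[predC [pred h : 'I_K | sc h]]|; first by apply: eq_card => h; rewrite !inE.
  by rewrite -[X in X = _](addKn #|[pred h : 'I_K | sc h]|) hC.
rewrite (bigID sc) /= /sc big1 ?add0r; last by move=> h ->.
under eq_bigr => h hh do rewrite (negbTE hh).
rewrite big_split /= sumr_const hcard.
case: (eqVneq c 0%N) => [hc0|hc].
  exfalso.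
  have hnone : \sum_(h < K | ~~ sc h) empA R grp S h = 0.
    apply: big1 => h hh; exfalso.
    have := card0_eq (A := [pred h | ~~ sc h]); rewrite hcard hc0 => /(_ erefl h).
    by rewrite !inE hh.
  move: h2; rewrite /c in hc0; rewrite hc0 mulr0.
  by rewrite hnone addr0 in Hall; rewrite Hall ler10.
have hc' : (c%:R : R) != 0 by rewrite pnatr_eq0.
by rewrite -[_ *+ c]mulr_natl mulrA mulfV // mul1r addrC.
Qed.
End S.

Lemma gmin_spec (f : nat -> nat) i : (exists j, (i <= f j)%N) -> (i <= f (gmin f i))%N.
Proof. by move=> h; rewrite /gmin; case: pselect => // h'; case: ex_minnP. Qed.

Lemma St_size (U : eqType) (x : nat -> U) t : (size (St x t) <= t)%N.
Proof. by rewrite /St; apply: leq_trans (size_undup _) _; rewrite size_map size_iota. Qed.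

Lemma St_mem (U : eqType) (x : nat -> U) t y : y \in St x t -> exists2 k, (1 <= k)%N & x k = y.
Proof. by rewrite /St mem_undup => /mapP [k]; rewrite mem_iota => /andP[h _] ->; exists k. Qed.

Unset Implicit Arguments.
Set Strict Implicit.

Theorem mainTheorem8 (U : countType) (R : realFieldType) (K : nat)
  (grp : U -> 'I_K) (alpha : R) (L : nat -> set U) (f : nat -> nat)
  (hU : infinite_set (fun _ : U => True))
  (hL : forall i, (1 <= i)%N -> infinite_set (L i))
  (halpha : 0 <= alpha <= 1)
  (hfmono : forall a b, (a <= b)%N -> (f a <= f b)%N)
  (hflim : forall n, exists T, forall t, (T <= t)%N -> (n <= f t)%N) :
  forall i, (1 <= i)%N ->
  forall x : nat -> U, enumerates (L i) x ->
  forall sel : nat -> 'I_K -> U, valid_sel grp alpha L f x sel ->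
    (forall t, enat_le_nat (tstar grp alpha L f i) (size (St x t)) ->
       prob (Gen grp alpha L f x sel t) (fun y => L i y /\ y \notin St x t) = 1)
    /\
    (forall t, (1 <= t)%N -> forall g : 'I_K,
       `|empA R grp (St x t) g - distA grp (Gen grp alpha L f x sel t) g| <= alpha).
Proof.
move=> i hi x [hx1 hx2] sel hsel.
have ha0 : 0 <= alpha by case/andP: halpha.
have HG : forall t, It_at grp alpha L f x t != [::] ->
  Gen grp alpha L f x sel t =
  [seq (sel t g, empA R grp (St x t) g + (K - nscarce grp L (It_at grp alpha L f x t) (St x t))%:R^-1 *
             \sum_(h < K | `[< scarceG grp L (It_at grp alpha L f x t) (St x t) h >]) empA R grp (St x t) h)
      | g <- enum 'I_K & ~~ `[< scarceG grp L (It_at grp alpha L f x t) (St x t) g >]].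
  by move=> t; rewrite /Gen; case: (It_at grp alpha L f x t).
have HE : forall t, It_at grp alpha L f x t = [::] -> Gen grp alpha L f x sel t = emp R (St x t).
  by move=> t; rewrite /Gen => ->.
have HN : forall t, It_at grp alpha L f x t != [::] ->
    ~ suffers grp alpha L (It_at grp alpha L f x t) (St x t).
  move=> t hne; rewrite /It_at It_foldl.
  case: (fold_nsuff grp alpha L (St x t) (proc grp alpha L (f t)).1 [::]) => // h.
  by move: hne; rewrite /It_at It_foldl h eqxx.
have HS : forall t, It_at grp alpha L f x t != [::] ->
    forall g, ~~ `[< scarceG grp L (It_at grp alpha L f x t) (St x t) g >] -> grp (sel t g) = g.
  move=> t hne g /asboolPn hg; by case: (hsel t g hne hg).
split; last first.
  move=> t ht g.
  case: (eqVneq (It_at grp alpha L f x t) [::]) => [h0|hne].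
    by rewrite HE // subrr normr0.
  rewrite HG //; apply: gen_repr => //; [exact: HN | exact: HS].
move=> t; rewrite /tstar; case hm: (mstar grp alpha L i) => [m|] //=.
rewrite geq_max => /andP[hg hmS].
have hSne : St x t != [::] by case: (St x t) hmS.
have hft : (i <= f t)%N.
  have [T hT] := hflim i.
  apply: leq_trans (gmin_spec (ex_intro _ T (hT T (leqnn T)))) _.
  by apply: hfmono; apply: leq_trans hg (St_size x t).
have [hin hinv] := invariant hi hm hft.
have hSL : forall y, y \in St x t -> L i y by move=> y /St_mem [k hk <-]; apply: hx1.
have hiI : i \in It_at grp alpha L f x t.
  apply: It_has => // D hD hiD hDS hs.
  have := hinv D (St x t) hD hiD; rewrite /good => /(_ (And4 (undup_uniq _) hSne hDS hs)).
  by rewrite leqNgt hmS.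
have hne : It_at grp alpha L f x t != [::] by case: (It_at _ _ _ _ _ _) hiI.
rewrite prob_all.
  by rewrite HG //; apply: gen_mass => //; [exact: HN | exact: HS].
move=> a; rewrite HG // => /mapP [g0]; rewrite mem_filter => /andP[/asboolPn hg0 _] -> /=.
have [_ hint hnot] := hsel t g0 hne hg0.
by split => //; apply: hint.
Qed.
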